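(* Let $g \in L^2(\mathbb{R})$ be a real-valued function with $\|g\|_2 = 1$. Let $\alpha = V_g g(0,1)$ and $$A = \begin{bmatrix} 1 & \alpha \\ \overline{\alpha} & 1 \end{bmatrix}, \qquad u(a,b) = \begin{bmatrix} V_g g(a,b) \\ V_g g(a, b-1)\end{bmatrix}, \qquad F(a,b) = \langle A^{-1} u(a,b), u(a,b)\rangle .$$ Then $F(a,b) = F(a, 1-b)$ for all $(a,b) \in \mathbb{Z}\times\mathbb{R}$ with $b \neq 1/2$, and $F(-a, 1/2) = F(a, 1/2)$ for all $a \in \mathbb{Z}$.
   Context: The short-time Fourier transform of $f \in L^2(\mathbb{R})$ with window $g\in L^2(\mathbb{R})$ is $V_g f(x,y) = \int_{\mathbb{R}} f(t)\overline{g(t-x)} e^{-2\pi i y t}\,dt$. The inner product on $\mathbb{C}^2$ is $\langle v, w\rangle = \sum_j v_j \overline{w_j}$. The matrix $A$ is the Gramian of $\{g, e^{2\pi i\cdot}g\}$, which are linearly independent, so $|\alpha|<1$ and $A$ is invertible. *)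

(* Defs.v *)
From mathcomp Require Import all_boot all_order all_algebra.
From mathcomp Require Import all_classical all_reals all_analysis.
From mathcomp Require Import complex.
Set Implicit Arguments. Unset Strict Implicit. Unset Printing Implicit Defensive.
Import Order.TTheory GRing.Theory Num.Theory.
Local Open Scope ring_scope.
Local Open Scope classical_set_scope.

(* Short-time Fourier transform V_g f (x,y) = \int f(t) conj(g(t-x)) e^{-2 pi i y t} dt,
   for REAL-valued f and g (the only case needed here). *)
Definition stft (R : realType) (g f : R -> R) (x y : R) : R[i] :=
  Complex
    (Rintegral (@lebesgue_measure R) setT
       (fun t => f t * g (t - x) * cos (2 * pi * y * t)))
    (- Rintegral (@lebesgue_measure R) setT
       (fun t => f t * g (t - x) * sin (2 * pi * y * t))).

Definition L2_unit (R : realType) (g : R -> R) : Prop :=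
  measurable_fun setT g /\
  (@lebesgue_measure R).-integrable setT (fun t => ((g t) ^+ 2)%:E) /\
  (\int[@lebesgue_measure R]_t ((g t) ^+ 2)%:E = 1)%E.

Definition cinner (R : realType) (v w : 'cV[R[i]]_2) : R[i] :=
  \sum_(j < 2) v j ord0 * conjc (w j ord0).

Definition alphaG (R : realType) (g : R -> R) : R[i] := stft g g 0 1.

Definition Amat (R : realType) (g : R -> R) : 'M[R[i]]_2 :=
  \matrix_(i < 2, j < 2)
     (if i == j then 1 else if (i == 0) then alphaG g else conjc (alphaG g)).

Definition uvec (R : realType) (g : R -> R) (a b : R) : 'cV[R[i]]_2 :=
  \col_(i < 2) (if i == 0 then stft g g a b else stft g g a (b - 1)).

Definition Ffun (R : realType) (g : R -> R) (a b : R) : R[i] :=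
  cinner (invmx (Amat g) *m uvec g a b) (uvec g a b).

(* Main.v *)
From HB Require Import structures.
Require Import Defs.
From mathcomp Require Import all_boot all_order all_algebra.
From mathcomp Require Import all_classical all_reals all_analysis.
From mathcomp Require Import complex measurable_realfun ring lra.
Import Order.TTheory GRing.Theory Num.Theory.
Local Open Scope ring_scope.
Local Open Scope classical_set_scope.
Local Open Scope complex_scope.

Section S.
Variable R : realType.

Lemma mshift (c : R) : measurable_fun setT (fun x : R => x + c).
Proof. by apply: measurable_funD => //. Qed.

Definition shiftm (c : R) : set (measurableTypeR R) -> \bar R :=
  fun A => (@lebesgue_measure R) ((fun x => x + c) @^-1` A).

Let shiftm0 c : shiftm c set0 = 0%E.
Proof. by rewrite /shiftm preimage_set0 measure0. Qed.

Let shiftm_ge0 c A : (0 <= shiftm c A)%E.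
Proof. rewrite /shiftm; exact: measure_ge0. Qed.

Let shiftm_sigma_additive c : semi_sigma_additive (shiftm c).
Proof.
move=> F mF tF mUF; rewrite /shiftm preimage_bigcup.
apply: measure_semi_sigma_additive.
- by move=> n; have := mshift c measurableT _ (mF n); rewrite setTI.
- apply/trivIsetP => /= i j _ _ ij; rewrite -preimage_setI.
  by move/trivIsetP : tF => /(_ _ _ _ _ ij) ->//; rewrite preimage_set0.
- by have := mshift c measurableT _ mUF; rewrite setTI preimage_bigcup.
Qed.

HB.instance Definition _ c := isMeasure.Build _ _ _
  (shiftm c) (shiftm0 c) (shiftm_ge0 c) (@shiftm_sigma_additive c).

Lemma leb_shift (c : R) A : measurable A ->
  (@lebesgue_measure R) A = shiftm c A.
Proof.
move=> mA; apply: (@lebesgue_measure_unique R (shiftm c)) => // X [[a b] _ <-] /=.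
rewrite /shiftm.
have -> : (fun x => x + c) @^-1` `]a, b] = `]a - c, b - c].
  by apply/seteqP; split => x /=; rewrite !in_itv /= ltrBlDr lerBrDr.
rewrite !lebesgue_measure_itv /= !lte_fin ltrD2r; case: ifP => // _.
by rewrite -!EFinD; congr EFin; ring.
Qed.

Local Open Scope ereal_scope.
Lemma mshift' (c : R) : measurable_fun (T:=measurableTypeR R) (U:=measurableTypeR R) setT (fun x : R => x + c)%R.
Proof. exact: mshift. Qed.

Lemma integral_shift (c : R) (f : R -> \bar R) : measurable_fun setT f ->
  \int[@lebesgue_measure R]_x f x = \int[@lebesgue_measure R]_x f (x + c)%R.
Proof.
move=> mf.
rewrite (eq_measure_integral (shiftm c)); last by move=> A mA _; exact: leb_shift.
rewrite integralE [in RHS]integralE.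
congr (_ - _).
- have := @ge0_integral_pushforward _ _ (measurableTypeR R) (measurableTypeR R) R _ (mshift' c) (@lebesgue_measure R) setT f^\+
    measurableT (measurable_funepos mf) (fun y _ => funepos_ge0 _ _).
  rewrite preimage_setT => ->. apply: eq_integral => x _. by rewrite /= !funeposE.
- have := @ge0_integral_pushforward _ _ (measurableTypeR R) (measurableTypeR R) R _ (mshift' c) (@lebesgue_measure R) setT f^\-
    measurableT (measurable_funeneg mf) (fun y _ => funeneg_ge0 _ _).
  rewrite preimage_setT => ->. apply: eq_integral => x _. by rewrite /= !funenegE.
Qed.

Local Close Scope ereal_scope.

Lemma Rint_shift (f : R -> R) c : measurable_fun setT f ->
  Rintegral (@lebesgue_measure R) setT f =
  Rintegral (@lebesgue_measure R) setT (fun t => f (t + c)).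
Proof.
move=> mf; rewrite /Rintegral; congr fine.
by apply: (@integral_shift c (fun x => (f x)%:E)); apply/measurable_EFinP.
Qed.

Lemma RintN (f : R -> R) :
  Rintegral (@lebesgue_measure R) setT (fun t => - f t) =
  - Rintegral (@lebesgue_measure R) setT f.
Proof.
rewrite /Rintegral.
set F := fun x => (f x)%:E.
have -> : (fun x => (- f x)%:E) = (fun x => (- F x)%E) by [].
have [hd|hnd] := boolP ((\int[@lebesgue_measure R]_(x in setT) F^\+ x) +?
   (- (\int[@lebesgue_measure R]_(x in setT) F^\- x)))%E.
  by rewrite integralN // fineN.
rewrite [in LHS]integralE [in RHS]integralE funeposN funenegN.
move: hnd; rewrite /adde_def negb_and !negbK => /orP[/andP[/eqP -> /eqP ->]|/andP[/eqP -> /eqP ->]] //=.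
all: rewrite ?addeNy ?addNye /= ?oppr0 //.
have h0 : (0 <= \int[@lebesgue_measure R]_x F^\- x)%E.
  by apply: integral_ge0 => x _; exact: funeneg_ge0.
move: h0; case: (\int[@lebesgue_measure R]_x F^\- x)%E => //.
Qed.

Lemma RintZs (e : R) (F : R -> R) : e = 1 \/ e = -1 ->
  Rintegral (@lebesgue_measure R) setT (fun t => e * F t) =
  e * Rintegral (@lebesgue_measure R) setT F.
Proof.
case=> ->.
  by rewrite mul1r; congr Rintegral; apply: funext => t; rewrite mul1r.
by rewrite mulN1r -RintN; congr Rintegral; apply: funext => t; rewrite mulN1r.
Qed.

Lemma mcos : measurable_fun setT (@cos R).
Proof. apply: continuous_measurable_fun; exact: continuous_cos. Qed.
Lemma msin : measurable_fun setT (@sin R).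
Proof. apply: continuous_measurable_fun; exact: continuous_sin. Qed.

Lemma mtrig (tr : R -> R) (ctr : measurable_fun setT tr) (k : R) :
  measurable_fun setT (fun t : R => tr (k * t)).
Proof.
apply: (measurableT_comp (f := tr) (g := fun t => k * t)) => //.
by apply: measurable_funM.
Qed.

Lemma mint (g : R -> R) (mg : measurable_fun setT g) x k (tr : R -> R)
  (ctr : measurable_fun setT tr) :
  measurable_fun setT (fun t => g t * g (t - x) * tr (k * t)).
Proof.
apply: measurable_funM; last exact: mtrig.
apply: measurable_funM => //.
exact: (measurableT_comp mg (mshift (-x))).
Qed.

Lemma stftN (g : R -> R) x y : stft g g x (-y) = conjc (stft g g x y).
Proof.
rewrite /stft /=; congr Complex.
  by apply: eq_Rintegral => t _; rewrite mulrN mulNr cosN.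
rewrite opprK -RintN; apply: eq_Rintegral => t _.
by rewrite mulrN mulNr sinN mulrN ?opprK.
Qed.

Lemma stft_neg (g : R -> R) (mg : measurable_fun setT g) (a y : R) :
  sin (2 * pi * y * a) = 0 ->
  stft g g (-a) y = (cos (2 * pi * y * a))%:C * stft g g a y.
Proof.
move=> hs; set e := cos _.
have he : e = 1 \/ e = -1.
  have : e ^+ 2 == 1.
    by rewrite -(cos2Dsin2 (2 * pi * y * a)) hs expr0n addr0.
  by rewrite sqrf_eq1 => /orP[/eqP|/eqP]; [left|right].
have hc t : cos (2 * pi * y * (t + -a)) = e * cos (2 * pi * y * t).
  by rewrite mulrDr cosD mulrN cosN sinN hs oppr0 mulr0 subr0 mulrC.
have hsn t : sin (2 * pi * y * (t + -a)) = e * sin (2 * pi * y * t).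
  by rewrite mulrDr sinD mulrN cosN sinN hs oppr0 mulr0 addr0 mulrC.
have h1 : Rintegral (@lebesgue_measure R) setT
    (fun t => g t * g (t - - a) * cos (2 * pi * y * t)) =
  e * Rintegral (@lebesgue_measure R) setT
    (fun t => g t * g (t - a) * cos (2 * pi * y * t)).
  rewrite (Rint_shift _ (-a)); last exact: (mint g mg (-a) (2 * pi * y) cos mcos).
  rewrite -RintZs //; congr Rintegral; apply: funext => t.
  by rewrite hc addrK; ring.
have h2 : Rintegral (@lebesgue_measure R) setT
    (fun t => g t * g (t - - a) * sin (2 * pi * y * t)) =
  e * Rintegral (@lebesgue_measure R) setT
    (fun t => g t * g (t - a) * sin (2 * pi * y * t)).
  rewrite (Rint_shift _ (-a)); last exact: (mint g mg (-a) (2 * pi * y) sin msin).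
  rewrite -RintZs //; congr Rintegral; apply: funext => t.
  by rewrite hsn addrK; ring.
rewrite /stft h1 h2 /=; congr Complex; ring.
Qed.


Definition col2 (x y : R[i]) : 'cV[R[i]]_2 := \col_(i < 2) (if i == 0 then x else y).

Lemma sum2 (F : 'I_2 -> R[i]) : \sum_(i < 2) F i = F 0 + F 1.
Proof. by rewrite !big_ord_recl big_ord0 addr0; congr (F _ + F _); apply: val_inj. Qed.

Lemma cinner_col2 (M : 'M[R[i]]_2) x y : cinner (M *m col2 x y) (col2 x y) =
  (M 0 0 * x + M 0 1 * y) * conjc x + (M 1 0 * x + M 1 1 * y) * conjc y.
Proof.
by rewrite /cinner sum2 !mxE !sum2 !mxE /=.
Qed.

Lemma cinner_swap (M : 'M[R[i]]_2) x y : M 0 0 = M 1 1 ->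
  cinner (M *m col2 x y) (col2 x y) = cinner (M *m col2 (conjc y) (conjc x)) (col2 (conjc y) (conjc x)).
Proof.
move=> hM; rewrite !cinner_col2 !conjcK hM; ring.
Qed.

Lemma cinner_scale (M : 'M[R[i]]_2) x y (k : R[i]) : k * conjc k = 1 ->
  cinner (M *m col2 (k * x) (k * y)) (col2 (k * x) (k * y)) =
  cinner (M *m col2 x y) (col2 x y).
Proof.
move=> hk; rewrite !cinner_col2 !rmorphM.
transitivity ((k * conjc k) * ((M 0 0 * x + M 0 1 * y) * conjc x + (M 1 0 * x + M 1 1 * y) * conjc y)); first by ring.
by rewrite hk mul1r.
Qed.

Lemma invA_diag (g : R -> R) : invmx (Amat g) 0 0 = invmx (Amat g) 1 1.
Proof.
rewrite /invmx; case: ifP => _; last by rewrite /Amat !mxE.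
rewrite !mxE /cofactor !det_mx11 !mxE /=.
by rewrite (_ : (1 %% 2 + 1 %% 2)%N = 2) // expr0 expr2 mulN1r opprK.
Qed.

Lemma sin_nat (n : nat) : sin (pi * n%:R) = 0 :> R.
Proof.
by rewrite mulr_natr -[pi *+ n]add0r (alternatingn (@sinDpi R)) sin0 mulr0.
Qed.

Lemma sin_int (a : int) : sin (pi * a%:~R) = 0 :> R.
Proof.
case: a => n; first exact: sin_nat.
by rewrite NegzE mulrNz mulrN sinN sin_nat oppr0.
Qed.

Lemma Ffun_col (g : R -> R) a b : Ffun g a b =
  cinner (invmx (Amat g) *m col2 (stft g g a b) (stft g g a (b - 1)))
         (col2 (stft g g a b) (stft g g a (b - 1))).
Proof. by []. Qed.

End S.

Theorem lemma2p6 (R : realType) (g : R -> R) (hg : L2_unit g) :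
  (forall (a : int) (b : R), b != 2^-1 ->
     Ffun g a%:~R b = Ffun g a%:~R (1 - b)) /\
  (forall a : int, Ffun g (- a%:~R) 2^-1 = Ffun g a%:~R 2^-1).
Proof.
have mg := hg.1.
have hM := @invA_diag R g.
split.
  move=> a b _; rewrite !Ffun_col.
  have e1 : 1 - b - 1 = - b by ring.
  rewrite e1 (_ : 1 - b = - (b - 1)); last by ring.
  rewrite !stftN.
  exact: cinner_swap.
move=> a; rewrite !Ffun_col.
have hs := @sin_int R a.
pose c : R := cos (pi * (a%:~R : R)).
have k1 : 2 * pi * 2^-1 * a%:~R = pi * a%:~R :> R.
  by field.
have k2 : 2 * pi * (2^-1 - 1) * a%:~R = - (pi * a%:~R) :> R.
  by field.
have u1 : stft g g (- a%:~R) 2^-1 = c%:C * stft g g a%:~R 2^-1.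
  by rewrite (@stft_neg R g mg) ?k1.
have u2 : stft g g (- a%:~R) (2^-1 - 1) = c%:C * stft g g a%:~R (2^-1 - 1).
  by rewrite (@stft_neg R g mg) ?k2 ?cosN // sinN hs oppr0.
rewrite u1 u2 cinner_scale //.
have cc : c * c = 1.
  by rewrite -expr2 -(cos2Dsin2 (pi * a%:~R)) hs expr0n addr0.
by apply/eqP; rewrite eq_complex /= oppr0 !mulr0 mul0r subr0 addr0 cc !eqxx.
Qed.
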